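(* Let $X$ be a group and $B$ a left $X$-group. The assignment $[q]\mapsto[(q\circ\iota_X)^{-1}]$, where $(q\circ\iota_X)^{-1}(x)=(q(\iota_X(x)))^{-1}$, is a well-defined isomorphism of pointed sets $$\mathsf{Desc}^1(\mathsf T^l_{\iota_B},((B,m_B),p_B))\cong\mathcal H^1(X,B),$$ and there is an isomorphism of groups $\mathsf{Desc}^0(\mathsf T^l_{\iota_B},((B,m_B),p_B))\cong\mathcal H^0(X,B)$. In particular these coincide with Serre's non-abelian cohomology $H^1(X,B)$ and $H^0(X,B)$.
   Context: A left $X$-group is a group $B$ with $\star:X\times B\to B$ satisfying $1_X\star b=b$, $(x_1x_2)\star b=x_1\star(x_2\star b)$, $x\star(b_1b_2)=(x\star b_1)(x\star b_2)$. $B\rtimes X$ is the group on $B\times X$ with $(b_1,x_1)(b_2,x_2)=(b_1(x_1\star b_2),x_1x_2)$; $\iota_B(b)=(b,1_X)$, $\iota_X(x)=(1_B,x)$, $p_B(b,x)=b$. $\mathcal H^0(X,B)=\{b: x\star b=b\ \forall x\}$; a 1-cocycle is $r:X\to B$ with $r(x_1x_2)=r(x_1)(x_1\star r(x_2))$; $r\sim r'$ iff $r(x)(x\star b_0)=b_0r'(x)$ for some $b_0\in B$ and all $x$; $\mathcal H^1(X,B)$ is the set of classes, pointed by the class of the trivial cocycle. $\mathcal Z^1(\mathsf T^l_{\iota_B},(B,m_B))$ is the set of maps $q:B\rtimes X\to B$ with (ZL1) $q(1)=1_B$, (ZL2) $q(\iota_B(b)a)=b\,q(a)$, (ZL3)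 $q(aa')=q(a\,\iota_B(q(a')))$ (algebra structures on the left $B$-set $B$ for the monad $(B\rtimes X)\otimes_B-$), pointed by $p_B$; $\mathsf{Desc}^1(\mathsf T^l_{\iota_B},((B,m_B),p_B))$ is its quotient by $q\sim q'$ iff $q(a)b_0=q'(a\,\iota_B(b_0))$ for some $b_0\in B$ and all $a$, pointed by $[p_B]$; $\mathsf{Desc}^0$ is the automorphism group of the algebra $((B,m_B),p_B)$, i.e. the group of maps $b\mapsto bb_0$ with $p_B(a\,\iota_B(b_0))=p_B(a)b_0$ for all $a$, under composition. *)

(* Defs.v *)
Set Implicit Arguments.

Record Group := {
  gcar :> Type;
  gmul : gcar -> gcar -> gcar;
  gone : gcar;
  ginv : gcar -> gcar;
  gmulA : forall a b c, gmul a (gmul b c) = gmul (gmul a b) c;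
  gmul1l : forall a, gmul gone a = a;
  gmul1r : forall a, gmul a gone = a;
  gmulVl : forall a, gmul (ginv a) a = gone;
  gmulVr : forall a, gmul a (ginv a) = gone }.

Arguments gmul {g} _ _.
Arguments gone {g}.
Arguments ginv {g} _.

Record XGroup (X : Group) := {
  xgrp :> Group;
  act : X -> xgrp -> xgrp;
  act_one : forall b, act gone b = b;
  act_mul : forall x1 x2 b, act (gmul x1 x2) b = act x1 (act x2 b);
  act_hom : forall x b1 b2, act x (gmul b1 b2) = gmul (act x b1) (act x b2) }.

Arguments act {X} _ _ _.

Section Defs.
Variables (X : Group) (B : XGroup X).

Definition sd_mul (a1 a2 : B * X) : B * X :=
  (gmul (fst a1) (act B (snd a1) (fst a2)), gmul (snd a1) (snd a2)).
Definition sd_one : B * X := (gone, gone).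
Definition iotaB (b : B) : B * X := (b, gone).
Definition iotaX (x : X) : B * X := (gone, x).
Definition pB (a : B * X) : B := fst a.

Definition H0 (b : B) : Prop := forall x : X, act B x b = b.

Definition cocycle (r : X -> B) : Prop :=
  forall x1 x2, r (gmul x1 x2) = gmul (r x1) (act B x1 (r x2)).
Definition cohomologous (r r' : X -> B) : Prop :=
  exists b0 : B, forall x, gmul (r x) (act B x b0) = gmul b0 (r' x).
Definition trivial_cocycle : X -> B := fun _ => gone.

(* Z^1(T^l_{iota_B}, (B, m_B)) : algebra structures, and the relation defining Desc^1 *)
Definition Zalg (q : B * X -> B) : Prop :=
  q sd_one = gone /\
  (forall b a, q (sd_mul (iotaB b) a) = gmul b (q a)) /\
  (forall a a', q (sd_mul a a') = q (sd_mul a (iotaB (q a')))).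
Definition desc_rel (q q' : B * X -> B) : Prop :=
  exists b0 : B, forall a, gmul (q a) b0 = q' (sd_mul a (iotaB b0)).

(* Desc^0: maps b |-> b b0 that are algebra automorphisms of ((B,m_B),p_B) *)
Definition Desc0 (f : B -> B) : Prop :=
  exists b0 : B, (forall b, f b = gmul b b0) /\
                 (forall a, pB (sd_mul a (iotaB b0)) = gmul (pB a) b0).

Definition cocycle_of (q : B * X -> B) : X -> B := fun x => ginv (q (iotaX x)).

End Defs.
Arguments Zalg {X B} q.
Arguments desc_rel {X B} q q'.
Arguments cocycle {X B} r.
Arguments cohomologous {X B} r r'.
Arguments Desc0 {X B} f.
Arguments H0 {X B} b.
Arguments cocycle_of {X B} q _.
Arguments pB {X B} a.
Arguments sd_mul {X B} a1 a2.
Arguments iotaB {X B} b.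
Arguments iotaX {X B} x.
Arguments sd_one {X B}.

(* Main.v *)
Require Import Defs.
From Stdlib Require Import FunctionalExtensionality.

Arguments gmulA {g} a b c.
Arguments gmul1l {g} a.
Arguments gmul1r {g} a.
Arguments gmulVl {g} a.
Arguments gmulVr {g} a.

Section GL.
Variable G : Group.
Lemma cancl (a b c : G) : gmul a b = gmul a c -> b = c.
Proof. intro H. rewrite <- (gmul1l b), <- (gmul1l c), <- (gmulVl a), <- !gmulA, H. reflexivity. Qed.
Lemma inv_uniq (a b : G) : gmul a b = gone -> b = ginv a.
Proof. intro H. apply (cancl a). rewrite H, gmulVr. reflexivity. Qed.
Lemma inv_mul (a b : G) : ginv (gmul a b) = gmul (ginv b) (ginv a).
Proof. symmetry. apply inv_uniq. rewrite <- gmulA, (gmulA b), gmulVr, gmul1l, gmulVr. reflexivity. Qed.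
Lemma inv_inv (a : G) : ginv (ginv a) = a.
Proof. symmetry. apply inv_uniq. apply gmulVl. Qed.
Lemma inv_one : ginv (@gone G) = gone.
Proof. symmetry. apply inv_uniq. apply gmul1l. Qed.
Lemma moveL (a b c d : G) : gmul a b = gmul c d <-> gmul (ginv a) c = gmul b (ginv d).
Proof. split; intro H.
- rewrite <- (gmul1r c), <- (gmulVr d), (gmulA c d), <- H, <- (gmulA a b), (gmulA (ginv a) a), gmulVl, gmul1l. reflexivity.
- rewrite <- (gmul1l (gmul c d)), <- (gmulVr a), <- (gmulA a (ginv a)), (gmulA (ginv a) c d), H, <- (gmulA b), gmulVl, gmul1r. reflexivity.
Qed.
End GL.
Arguments cancl {G} a b c.
Arguments inv_uniq {G} a b.
Arguments inv_mul {G} a b.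
Arguments inv_inv {G} a.
Arguments inv_one {G}.
Arguments moveL {G} a b c d.

Section XL.
Variables (X : Group) (B : XGroup X).
Lemma act_1 (x : X) : act B x gone = gone.
Proof. apply (cancl (act B x gone)). rewrite <- act_hom, !gmul1r. reflexivity. Qed.
Lemma act_inv (x : X) (b : B) : act B x (ginv b) = ginv (act B x b).
Proof. apply inv_uniq. rewrite <- act_hom, gmulVr, act_1. reflexivity. Qed.

Lemma zl2 (q : B * X -> B) : Zalg q -> forall b x, q (b, x) = gmul b (q (gone, x)).
Proof. intros [_ [H2 _]] b x. rewrite <- H2. unfold sd_mul, iotaB; simpl.
  rewrite act_one, gmul1r, gmul1l. reflexivity. Qed.

Lemma srel (q : B * X -> B) : Zalg q -> forall x x',
  q (gone, gmul x x') = gmul (act B x (q (gone, x'))) (q (gone, x)).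
Proof. intros HZ x x'. pose proof HZ as [_ [_ H3]].
  specialize (H3 (gone, x) (gone, x')). unfold sd_mul, iotaB in H3; simpl in H3.
  rewrite act_1, gmul1l, gmul1l, gmul1r in H3. rewrite H3, (zl2 q HZ). reflexivity. Qed.
End XL.
Arguments zl2 {X B q} HZ b x.
Arguments srel {X B q} HZ x x'.
Arguments act_1 {X B} x.
Arguments act_inv {X B} x b.

Theorem theorem5p6 (X : Group) (B : XGroup X) :
  (* [q] |-> [(q o iota_X)^{-1}] : Desc^1 -> H^1 is a well-defined isomorphism of pointed sets *)
  ((forall q : B * X -> B, Zalg q -> cocycle (cocycle_of q)) /\
   (forall q q' : B * X -> B, Zalg q -> Zalg q' ->
      (desc_rel q q' <-> cohomologous (cocycle_of q) (cocycle_of q'))) /\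
   (forall r : X -> B, cocycle r -> exists q : B * X -> B, Zalg q /\ cohomologous r (cocycle_of q)) /\
   Zalg (@pB X B) /\
   cohomologous (cocycle_of (@pB X B)) (@trivial_cocycle X B)) /\
  (* Desc^0 (under composition) is isomorphic as a group to H^0(X,B) *)
  (exists phi : (B -> B) -> B,
     (forall f : B -> B, Desc0 f -> H0 (phi f)) /\
     (forall f g : B -> B, Desc0 f -> Desc0 g -> phi (fun b => f (g b)) = gmul (phi f) (phi g)) /\
     (forall f g : B -> B, Desc0 f -> Desc0 g -> phi f = phi g -> f = g) /\
     (forall b : B, H0 b -> exists f : B -> B, Desc0 f /\ phi f = b)).
Proof.
split; [split; [|split; [|split; [|split]]] | ].
- intros q HZ x x'. unfold cocycle_of, iotaX.
  rewrite (srel HZ), inv_mul, act_inv. reflexivity.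
- intros q q' HZ HZ'. unfold desc_rel, cohomologous, cocycle_of, iotaX. split.
  + intros [b0 H]. exists b0. intro x. apply moveL. idtac.
    specialize (H (gone, x)). unfold sd_mul, iotaB in H; simpl in H.
    rewrite gmul1l, gmul1r, (zl2 HZ') in H. rewrite !inv_inv, H. reflexivity.
  + intros [b0 H]. exists b0. intros [b x]. unfold sd_mul, iotaB; simpl.
    specialize (H x). apply moveL in H. rewrite ?inv_inv in H.
    rewrite gmul1r, (zl2 HZ), (zl2 HZ' (gmul b _)), <- gmulA, H, gmulA. reflexivity.
- intros r Hr.
  assert (Hr1 : r gone = gone).
  { apply (cancl (r gone)). rewrite gmul1r. pose proof (Hr gone gone) as E.
    rewrite gmul1l, act_one in E. symmetry. exact E. }
  exists (fun a => gmul (fst a) (ginv (r (snd a)))). split; [split; [|split]|].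
  + simpl. rewrite Hr1, inv_one, gmul1l. reflexivity.
  + intros b [b' x]. unfold sd_mul, iotaB; simpl. rewrite act_one, gmul1l, gmulA. reflexivity.
  + intros [b x] [b' x']. unfold sd_mul, iotaB; simpl.
    rewrite gmul1r, Hr, inv_mul, act_hom, act_inv, !gmulA. reflexivity.
  + exists gone. intro x. unfold cocycle_of, iotaX; simpl.
    rewrite act_1, gmul1l, gmul1l, gmul1r, inv_inv. reflexivity.
- split; [|split].
  + reflexivity.
  + intros b [b' x]. unfold pB, sd_mul, iotaB; simpl. rewrite act_one. reflexivity.
  + intros [b x] [b' x']. unfold pB, sd_mul, iotaB; simpl. reflexivity.
- exists gone. intro x. unfold cocycle_of, trivial_cocycle, pB, iotaX; simpl.
  rewrite act_1, inv_one, !gmul1l. reflexivity.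
- exists (fun f => ginv (f gone)). split; [|split; [|split]].
  + intros f [b0 [Hf Hp]] x. rewrite Hf, gmul1l, act_inv. f_equal.
    specialize (Hp (gone, x)). unfold pB, sd_mul, iotaB in Hp; simpl in Hp.
    rewrite !gmul1l in Hp. exact Hp.
  + intros f g [f0 [Hf _]] [g0 [Hg _]]. rewrite !Hf, !Hg, !gmul1l, inv_mul. reflexivity.
  + intros f g [f0 [Hf _]] [g0 [Hg _]] E. rewrite Hf, Hg, !gmul1l in E.
    apply functional_extensionality. intro b. rewrite Hf, Hg.
    rewrite <- (inv_inv f0), E, inv_inv. reflexivity.
  + intros b Hb. exists (fun c => gmul c (ginv b)). split.
    * exists (ginv b). split; [reflexivity|].
      intros [c x]. unfold pB, sd_mul, iotaB; simpl. rewrite act_inv, Hb. reflexivity.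
    * simpl. rewrite gmul1l, inv_inv. reflexivity.
Qed.
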